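(* Let $(a_n)_{n\ge1}$ be a sequence of positive integers with $a_1=1$ such that $\alpha_n:=\#\{i:a_i=n\}<\infty$ for all $n$. Let $(X_n)_{n\ge1}$ be independent random variables with $\mathbb{P}(X_n=a_n)=\tfrac12=\mathbb{P}(X_n=0)$. Then, with $L$ ranging over positive integers: (1) if $\limsup_{n\to\infty}\alpha_n^{1/n}=\infty$, then $\liminf_{L\to\infty}\lim_{n\to\infty}\mathbb{P}(X_1=1\mid X_1+\dots+X_n\le L)=0$; (2) if $\limsup_{n\to\infty}\alpha_n^{1/n}<\infty$, then $\limsup_{L\to\infty}\lim_{n\to\infty}\mathbb{P}(X_1=1\mid X_1+\dots+X_n\le L)>0$. *)

(* Defs.v *)
From HB Require Import structures.
From mathcomp Require Import all_boot all_order all_algebra.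
From mathcomp Require Import all_classical all_reals all_analysis.
From mathcomp Require Import finmap.
Set Implicit Arguments. Unset Strict Implicit. Unset Printing Implicit Defensive.
Import Order.TTheory GRing.Theory Num.Theory.
Local Open Scope classical_set_scope.
Local Open Scope ring_scope.

Definition mutually_independent d (T : measurableType d) (R : realType)
  (P : probability T R) (X : nat -> T -> R) : Prop :=
  forall (I : {fset nat}) (B : nat -> set R),
    (forall i, i \in I -> measurable (B i)) ->
    P (\bigcap_(i in [set` I]) (X i @^-1` B i)) =
    (\prod_(i <- I) P (X i @^-1` B i))%E.

Definition condprob d (T : measurableType d) (R : realType)
  (P : probability T R) (A B : set T) : R :=
  fine (P (A `&` B)) / fine (P B).

(* alpha_n = #{ i : a_i = n } (meaningful when this set is finite) *)
Definition alpha (a : nat -> nat) (n : nat) : nat :=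
  #|` fset_set [set i | a i = n] |%fset.

(* Main.v *)
Require Import Defs.
From HB Require Import structures.
From mathcomp Require Import all_boot all_order all_algebra.
From mathcomp Require Import all_classical all_reals all_analysis.
From mathcomp Require Import finmap.
Import Order.TTheory GRing.Theory Num.Theory.
Import numFieldNormedType.Exports.
Local Open Scope classical_set_scope.
Local Open Scope ring_scope.

Fixpoint cnt (a : nat -> nat) (n m : nat) : nat :=
  match n with
  | 0 => 1
  | n'.+1 => cnt (fun i => a i.+1) n' m +
             (if (a 0 <= m)%N then cnt (fun i => a i.+1) n' (m - a 0) else 0)
  end.

Lemma cntS a n m : cnt a n.+1 m = cnt (fun i => a i.+1) n m +
  (if (a 0 <= m)%N then cnt (fun i => a i.+1) n (m - a 0) else 0).
Proof. by []. Qed.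

Lemma cnt_gt0 a n m : (0 < cnt a n m)%N.
Proof. by elim: n a m => [//|n IH] a m /=; rewrite ltn_addr. Qed.

Lemma cnt_mono a n m m' : (m <= m')%N -> (cnt a n m <= cnt a n m')%N.
Proof.
elim: n a m m' => [//|n IH] a m m' mm' /=.
apply: leq_add; first exact: IH.
case: ifP => h1; last by [].
rewrite (leq_trans h1 mm'); apply: IH; exact: leq_sub2r.
Qed.

Lemma cnt_stab1 a n m : (forall i, (n <= i)%N -> (m < a i)%N) ->
  cnt a n.+1 m = cnt a n m.
Proof.
elim: n a m => [|n IH] a m H.
  by rewrite /= ifN // -ltnNge; apply: H.
rewrite cntS [RHS]cntS.
rewrite IH; last by move=> i ni; apply: H.
case: ifP => // _; rewrite IH // => i ni.
by rewrite (leq_ltn_trans (leq_subr _ _)) //; apply: H.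
Qed.

Lemma cnt_stab a N m n : (forall i, (N <= i)%N -> (m < a i)%N) -> (N <= n)%N ->
  cnt a n m = cnt a N m.
Proof.
move=> H; elim: n => [|n IH]; first by rewrite leqn0 => /eqP ->.
rewrite leq_eqVlt => /orP[/eqP -> //|]; rewrite ltnS => Nn.
rewrite cnt_stab1 ?IH // => i ni; apply: H; exact: leq_trans ni.
Qed.

Lemma cnt_count a n m :
  (count (fun j => a j == m) (iota 0 n) <= cnt a n m)%N.
Proof.
elim: n a => [//|n IH] a /=.
rewrite -[1%N]addn0 iotaDl count_map.
rewrite addnC; apply: leq_add; first exact: IH.
case: eqP => [->|//]; rewrite leqnn; exact: cnt_gt0.
Qed.

Lemma cnt_ub (R : realType) (y : R) a n m : 1 <= y ->
  (cnt a n m)%:R <= y ^+ m * \prod_(j < n) (1 + y^-1 ^+ (a j)).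
Proof.
move=> y1; have y0 : 0 < y by rewrite (lt_le_trans ltr01).
elim: n a m => [|n IH] a m.
  by rewrite big_ord0 mulr1 exprn_ege1.
rewrite big_ord_recl /= natrD.
set P := \prod_(i < n) _.
have -> : P = \prod_(j < n) (1 + y^-1 ^+ (a j.+1)) by [].
rewrite mulrDl mul1r mulrDr.
have w0 : 0 < y^-1 by rewrite invr_gt0.
have Q0 : 0 < \prod_(j < n) (1 + y^-1 ^+ (a j.+1)).
  by rewrite prodr_gt0 // => i _; rewrite ltr_wpDr // exprn_ge0 // ltW.
apply: lerD; first exact: IH.
case: ifP => h; last first.
  by rewrite ltW // mulr_gt0 // ?exprn_gt0 // mulr_gt0 // exprn_gt0.
apply: le_trans (IH _ _) _.
rewrite mulrA ler_pM2r //.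
by rewrite -{2}(subnK h) exprD exprVn mulrK // unitfE expf_neq0 // gt_eqF.
Qed.

Lemma prod_le_expR (R : realType) n (g : 'I_n -> R) : (forall j, 0 <= g j) ->
  \prod_(j < n) (1 + g j) <= expR (\sum_(j < n) g j).
Proof.
move=> g0; rewrite expR_sum; apply: ler_prod => j _.
by rewrite addr_ge0 // expR_ge1Dx.
Qed.

Lemma group_sum (R : realType) (w : R) a n K :
  (forall j, (j < n)%N -> (a j < K)%N) ->
  \sum_(j < n) w ^+ (a j) =
  \sum_(k < K) (count (fun j => a j == k) (iota 0 n))%:R * w ^+ k.
Proof.
elim: n => [|n IH] H.
  by rewrite big_ord0 big1 // => k _; rewrite mul0r.
rewrite big_ord_recr IH; last by move=> j jn; apply: H; exact: ltnW.
have -> : iota 0 n.+1 = iota 0 n ++ [:: n] by rewrite -addn1 iotaD.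
under [in RHS]eq_bigr do rewrite count_cat /= addn0 natrD mulrDl.
rewrite big_split /=; congr (_ + _).
have aK : (a n < K)%N by apply: H.
rewrite (bigD1 (Ordinal aK)) //= eqxx mul1r big1 ?addr0 // => k kn.
case: eqP => [E|_]; last by rewrite mul0r.
by move: kn; rewrite -val_eqE /= E eqxx.
Qed.


Lemma count_le_alpha a k n : finite_set [set i | a i = k] ->
  (count (fun j => a j.+1 == k) (iota 0 n) <= alpha a k)%N.
Proof.
move=> fin.
have -> : count (fun j => a j.+1 == k) (iota 0 n) =
          count (fun j => a j == k) (iota 1 n).
  by rewrite -[1%N]addn0 iotaDl count_map.
rewrite -size_filter /alpha; apply: uniq_leq_size.
  by rewrite filter_uniq // iota_uniq.
move=> x; rewrite mem_filter => /andP[/eqP ax _].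
by rewrite in_fset_set // in_setE /=.
Qed.

Lemma alpha_le_count a k N : finite_set [set i | a i = k] ->
  (forall i, (N <= i)%N -> a i != k) ->
  (alpha a k <= count (fun j => a j == k) (iota 0 N))%N.
Proof.
move=> fin H.
rewrite -size_filter /alpha; apply: uniq_leq_size; first exact: fset_uniq.
move=> x; rewrite in_fset_set // in_setE /= => ax.
rewrite mem_filter ax eqxx /= mem_iota add0n /=.
by case: (leqP N x) => // Nx; move: (H x Nx); rewrite ax eqxx.
Qed.

Section esup_lemmas.
Local Open Scope ereal_scope.

Lemma esup_inf_eq (R : realType) (u : (\bar R)^nat) :
  limn_esup u = ereal_inf (range (esups u)).
Proof. by rewrite limn_esup_lim; apply: cvg_lim => //; exact: cvg_esups_inf. Qed.

Lemma esup_le_ev (R : realType) (u : (\bar R)^nat) (x : \bar R) :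
  (exists n, forall k, (n <= k)%N -> u k <= x) -> limn_esup u <= x.
Proof.
move=> [n Hn]; rewrite esup_inf_eq.
apply: (@le_trans _ _ (esups u n)); first by apply: ereal_inf_lbound; exists n.
by apply: ge_ereal_sup => _ [k /= nk <-]; exact: Hn.
Qed.

Lemma esup_lt_ev (R : realType) (u : (\bar R)^nat) (x : \bar R) :
  limn_esup u < x -> exists n, forall k, (n <= k)%N -> u k < x.
Proof.
rewrite esup_inf_eq => /ereal_inf_lt[_ [n _ <-] Hn].
exists n => k nk; apply: le_lt_trans Hn.
by apply: ereal_sup_ubound; exists k.
Qed.

Lemma einf_zero (R : realType) (u : (\bar R)^nat) :
  (forall k, 0 <= u k) ->
  (forall e : R, (0 < e)%R -> forall n, exists2 k, (n <= k)%N & u k < e%:E) ->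
  limn_einf u = 0.
Proof.
move=> u0 H; rewrite limn_einf_lim.
have -> : einfs u = fun=> 0.
  apply/funext => n /=; apply/eqP; rewrite eq_le; apply/andP; split.
    apply/lee_addgt0Pr => e e0; rewrite add0e.
    have [k nk uk] := H e e0 n.
    apply: le_trans (ltW uk); apply: ereal_inf_lbound; exists k => //.
  by apply: le_ereal_inf_tmp => _ [k /= nk <-]; exact: u0.
exact: lim_cst.
Qed.

Lemma esup_pos (R : realType) (u : (\bar R)^nat) (e : R) : (0 < e)%R ->
  (forall n, exists2 k, (n <= k)%N & e%:E <= u k) -> 0 < limn_esup u.
Proof.
move=> e0 H; rewrite ltNge; apply/negP => Hle.
have /esup_lt_ev[n Hn] : limn_esup u < e%:E by apply: le_lt_trans Hle _; rewrite lte_fin.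
have [k nk ek] := H n.
by move: (Hn k nk); rewrite ltNge ek.
Qed.
End esup_lemmas.

Definition rr (R : realType) (F : nat -> nat) (k : nat) : R :=
  (F k)%:R / ((F k.+1)%:R + (F k)%:R).

Lemma part1_core (R : realType) (F al : nat -> nat) (e : R) (n0 : nat) :
  (forall m, (0 < F m)%N) -> (forall m, (2 <= m)%N -> (al m <= F m)%N) ->
  0 < e -> (forall k, (n0 <= k)%N -> e <= rr R F k) ->
  exists M : R, exists n, forall k, (n <= k)%N ->
    (al k.+1)%:R `^ (k.+1%:R)^-1 <= M.
Proof.
move=> F0 Hal e0 He.
set K := Num.max e^-1 1.
have K1 : 1 <= K by rewrite le_max lexx orbT.
have K0 : 0 < K by apply: lt_le_trans K1.
have Fpos m : 0 < (F m)%:R :> R by rewrite ltr0n.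
have step k : (n0 <= k)%N -> (F k.+1)%:R <= K * (F k)%:R :> R.
  move=> nk; have := He k nk; rewrite /rr ler_pdivlMr ?addr_gt0 // => H.
  apply: (@le_trans _ _ (e^-1 * (F k)%:R)); last first.
    by rewrite ler_pM2r // le_max lexx.
  rewrite -(ler_pM2l e0) mulrA mulfV ?gt_eqF // mul1r.
  by apply: le_trans H; rewrite ler_pM2l // lerDl ler0n.
have grow j : (F (n0 + j)%N)%:R <= K ^+ j * (F n0)%:R :> R.
  elim: j => [|j IH]; first by rewrite addn0 expr0 mul1r.
  rewrite addnS; apply: le_trans (step _ (leq_addr _ _)) _.
  by rewrite exprS -mulrA ler_pM2l.
set C := (F n0)%:R : R.
have C1 : 1 <= C by rewrite /C ler1n.
exists (C * K), (maxn n0 2) => k.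
rewrite geq_max => /andP[nk k2].
have Hk : (al k.+1)%:R <= (C * K) ^+ k.+1 :> R.
  apply: le_trans (_ : (F k.+1)%:R <= _).
    by rewrite ler_nat; apply: Hal; rewrite (leq_trans k2).
  have -> : k.+1 = (n0 + (k.+1 - n0))%N by rewrite subnKC // ltnW.
  apply: le_trans (grow _) _.
  rewrite exprMn mulrC.
  apply: ler_pM.
  - by rewrite ler0n.
  - by rewrite exprn_ge0 // ltW.
  - by rewrite -[X in X <= _](expr1 C); apply: ler_weXn2l => //; rewrite addn_gt0 subn_gt0 ltnS nk orbT.
  - by apply: ler_weXn2l => //; rewrite leq_addl.
apply: le_trans (ge0_ler_powR _ _ _ Hk) _.
- by rewrite invr_ge0.
- by rewrite nnegrE.
- by rewrite nnegrE exprn_ge0 // mulr_ge0 // (le_trans ler01).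
have CK0 : 0 <= C * K by rewrite mulr_ge0 // ?(le_trans ler01) // ltW.
by rewrite -powR_mulrn // -powRrM mulfV ?powRr1 // pnatr_eq0.
Qed.

Lemma part2_core (R : realType) (F : nat -> nat) (D y : R) :
  (forall m, (0 < F m)%N) -> 1 <= y ->
  (forall m, (F m)%:R <= D * y ^+ m) ->
  forall n, exists2 k, (n <= k)%N & (1 + 2 * y)^-1 <= rr R F k.
Proof.
move=> F0 y1 Hub n; apply: contrapT => Hn.
have y0 : 0 < y by apply: lt_le_trans y1.
have Fpos m : 0 < (F m)%:R :> R by rewrite ltr0n.
have step k : (n <= k)%N -> 2 * y * (F k)%:R < (F k.+1)%:R :> R.
  move=> nk; have : rr R F k < (1 + 2 * y)^-1.
    by rewrite ltNge; apply/negP => H; apply: Hn; exists k.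
  have y2 : 0 < 1 + 2 * y by rewrite addr_gt0 // mulr_gt0.
  rewrite /rr ltr_pdivrMr ?addr_gt0 // => H.
  move: H; rewrite -(ltr_pM2l y2) mulrA mulfV ?gt_eqF // mul1r.
  by rewrite mulrDl mul1r [X in X < _]addrC ltrD2r.
have grow j : (2 * y) ^+ j <= (F (n + j)%N)%:R :> R.
  elim: j => [|j IH]; first by rewrite addn0 expr0 ler1n.
  rewrite addnS exprS; apply/ltW; apply: le_lt_trans (step _ (leq_addr _ _)).
  by rewrite ler_pM2l // mulr_gt0.
set X := D * y ^+ n.
have X0 : 0 <= X.
  have := Hub n; rewrite /X => H; apply: le_trans H; exact: ltW.
have := archi_boundP X0; set j := Num.Def.archi_bound X => Xj.
have : (2 * y) ^+ j <= X * y ^+ j.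
  by apply: le_trans (grow j) _; rewrite /X -mulrA -exprD; exact: Hub.
rewrite exprMn ler_pM2r ?exprn_gt0 //.
apply/negP; rewrite -ltNge; apply: lt_trans Xj _.
by rewrite -natrX ltr_nat ltn_expl.
Qed.

Lemma geo_sum (R : realType) K :
  \sum_(k < K) (2^-1 : R) ^+ k = 2 - 2 * (2^-1) ^+ K.
Proof.
elim: K => [|K IH]; first by rewrite big_ord0 expr0 mulr1 subrr.
rewrite big_ord_recr /= IH exprS mulrA divff ?mul1r; last by rewrite pnatr_eq0.
by rewrite mulr_natl mulr2n opprD addrA addrNK.
Qed.

Lemma part2_bound (R : realType) (a : nat -> nat) (C B : R) :
  (forall n, finite_set [set i | a i = n]) -> 0 <= C -> 1 <= B ->
  (forall k, (alpha a k)%:R <= C * B ^+ k) ->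
  forall N m, (cnt (fun i => a i.+1) N m)%:R <= expR (2 * C) * (2 * B) ^+ m.
Proof.
move=> afin C0 B1 Hal N m.
have B0 : 0 < B by apply: lt_le_trans B1.
have y1 : 1 <= 2 * B.
  by apply: le_trans B1 _; rewrite mulr_natl mulr2n lerDr ltW.
apply: le_trans (@cnt_ub R (2 * B) (fun i => a i.+1) N m y1) _.
rewrite mulrC ler_wpM2r ?exprn_ge0 ?(le_trans ler01) //.
have w0 : 0 <= (2 * B)^-1 by rewrite invr_ge0 (le_trans ler01).
apply: le_trans (@prod_le_expR R N (fun j : 'I_N => (2 * B)^-1 ^+ a j.+1) (fun j => exprn_ge0 _ w0)) _.
rewrite ler_expR.
set K := (\max_(j < N) a j.+1).+1.
rewrite (@group_sum _ _ (fun j => a j.+1) N K); last first.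
  by move=> j jN; rewrite ltnS (@leq_bigmax _ (fun j : 'I_N => a j.+1) (Ordinal jN)).
apply: (@le_trans _ _ (\sum_(k < K) C * (2^-1) ^+ k)).
  apply: ler_sum => k _.
  apply: (@le_trans _ _ ((alpha a k)%:R * (2 * B)^-1 ^+ k)).
    by rewrite ler_wpM2r ?exprn_ge0 // ler_nat count_le_alpha.
  apply: le_trans (ler_wpM2r (exprn_ge0 _ w0) (Hal k)) _.
  by rewrite -mulrA -exprMn invfM mulrCA mulfV ?gt_eqF // mulr1.
rewrite -mulr_sumr geo_sum mulrC ler_wpM2r //.
by rewrite lerBlDr lerDl mulr_ge0 // exprn_ge0 // invr_ge0.
Qed.

Fixpoint allb (n : nat) : seq (seq bool) :=
  if n is n'.+1 then map (cons false) (allb n') ++ map (cons true) (allb n')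
  else [:: [::]].

Fixpoint sumv (a : nat -> nat) (s : seq bool) : nat :=
  if s is b :: s' then (b * a 0 + sumv (fun i => a i.+1) s')%N else 0%N.

Lemma size_allb n s : s \in allb n -> size s = n.
Proof.
elim: n s => [|n IH] s /=; first by rewrite inE => /eqP ->.
by rewrite mem_cat => /orP[] /mapP[s' /IH <- ->].
Qed.

Lemma uniq_allb n : uniq (allb n).
Proof.
elim: n => [//|n IH] /=.
have ci (b : bool) : injective (cons b) by move=> x y [].
rewrite cat_uniq (map_inj_uniq (ci false)) (map_inj_uniq (ci true)).
apply/and3P; split; [exact: IH| |exact: IH].
apply/hasPn => x /mapP[s _ ->] /=.
by apply/mapP => -[s' _].
Qed.

Lemma size_allb_seq n : size (allb n) = (2 ^ n)%N.
Proof. by elim: n => [//|n IH] /=; rewrite size_cat !size_map IH expnS mul2n addnn. Qed.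

Lemma count_sumv a n L :
  count (fun s => (sumv a s <= L)%N) (allb n) = cnt a n L.
Proof.
elim: n a L => [//|n IH] a L /=.
rewrite count_cat !count_map IH; congr (_ + _)%N.
rewrite /preim /=.
case: ifP => h.
  rewrite -IH; apply: eq_count => s /=.
  by rewrite mul1n leq_subRL.
rewrite (@eq_count _ _ pred0) ?count_pred0 // => s /=.
rewrite mul1n; apply/negbTE; rewrite -ltnNge.
by apply: (@leq_trans (a 0)); [rewrite ltnNge h | exact: leq_addr].
Qed.

Lemma count_head a n L :
  count (fun s => head false s && (sumv a s <= L)%N) (allb n.+1) =
  if (a 0 <= L)%N then cnt (fun i => a i.+1) n (L - a 0) else 0%N.
Proof.
rewrite /= count_cat !count_map /preim /= count_pred0 add0n.
case: ifP => h.
  rewrite -count_sumv; apply: eq_count => s /=.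
  by rewrite mul1n leq_subRL.
rewrite (@eq_count _ _ pred0) ?count_pred0 // => s /=.
rewrite mul1n; apply/negbTE; rewrite -ltnNge.
by apply: (@leq_trans (a 0)); [rewrite ltnNge h | exact: leq_addr].
Qed.

Lemma sumv_nth a s : sumv a s = (\sum_(i < size s) nth false s i * a i)%N.
Proof.
elim: s a => [|b s IH] a /=; first by rewrite big_ord0.
by rewrite big_ord_recl IH.
Qed.

Definition vb (R : realType) (a : nat -> nat) (s : seq bool) (i : nat) : R :=
  if nth false s i then (a i)%:R else 0.

Definition atom (T : Type) (R : realType) (X : nat -> T -> R) (a : nat -> nat)
  (s : seq bool) : set T :=
  [set t | forall i, (i < size s)%N -> X i t = vb R a s i].
Arguments atom {T R}.

Lemma prod_const_seq (R : realType) (I : Type) (r : seq I) (c : R) :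
  \prod_(i <- r) c = c ^+ size r.
Proof. by elim: r => [|x r IH]; rewrite ?big_nil ?big_cons ?IH ?exprS. Qed.

Lemma sum_const_count (R : realType) (I : Type) (r : seq I) (Q : pred I) (c : R) :
  (\sum_(i <- r | Q i) c%:E)%E = ((count Q r)%:R * c)%:E.
Proof.
rewrite sumEFin; congr (_%:E).
elim: r => [|x r IH]; rewrite ?big_nil ?mul0r // big_cons /= IH.
by case: (Q x) => /=; rewrite ?add0n // natrD mulrDl mul1r.
Qed.

Lemma atom_eq (d : measure_display) (T : measurableType d) (R : realType)
  (X : nat -> T -> R) (a : nat -> nat) (s : seq bool) :
  atom X a s = \bigcap_(i in [set` seq_fset tt (iota 0 (size s))])
                 (X i @^-1` [set vb R a s i]).
Proof.
apply/seteqP; split => t.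
  move=> H i Hi; change (is_true (i \in seq_fset tt (iota 0 (size s)))) in Hi.
  by apply: H; move: Hi; rewrite seq_fsetE mem_iota.
move=> H i Hi; apply: H.
by change (is_true (i \in seq_fset tt (iota 0 (size s)))); rewrite seq_fsetE mem_iota.
Qed.

Lemma atom_measurable (d : measure_display) (T : measurableType d) (R : realType)
  (P : probability T R) (X : nat -> {RV P >-> R}) (a : nat -> nat) (s : seq bool) :
  measurable (atom (fun i => X i : T -> R) a s).
Proof.
rewrite atom_eq; apply: fin_bigcap_measurable; first exact: finite_fset.
move=> i _; exact: measurable_funPTI (measurable_set1 _).
Qed.

Lemma atom_prob (d : measure_display) (T : measurableType d) (R : realType)
  (P : probability T R) (X : nat -> {RV P >-> R}) (a : nat -> nat) (s : seq bool) :
  mutually_independent P (fun i => X i : T -> R) ->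
  (forall i, P [set t | X i t = (a i)%:R] = (2^-1)%:E) ->
  (forall i, P [set t | X i t = 0] = (2^-1)%:E) ->
  P (atom (fun i => X i : T -> R) a s) = ((2^-1) ^+ size s)%:E.
Proof.
move=> Xind Xa X0.
rewrite atom_eq Xind; last by move=> i _; exact: measurable_set1.
rewrite (eq_bigr (fun _ => (2^-1)%:E)); last first.
  by move=> i _; rewrite /vb; case: nth; [exact: Xa|exact: X0].
rewrite prodEFin prod_const_seq; congr (_ ^+ _)%:E.
by have := size_seq_fset tt (iota 0 (size s)); rewrite undup_id ?iota_uniq // size_iota.
Qed.

Lemma bigU_mem (T : Type) (I : eqType) (l : seq I) (Q : pred I) (F : I -> set T) t :
  (\big[setU/set0]_(s <- l | Q s) F s) t <-> exists2 s, (s \in l) && Q s & F s t.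
Proof.
elim: l => [|x l IH]; rewrite ?big_nil ?big_cons.
  by split => // -[s].
case: ifP => Qx.
  split.
    case=> [Fx|/IH[s /andP[sl Qs] Fs]]; first by exists x; rewrite ?inE ?eqxx ?Qx.
    by exists s => //; rewrite inE sl orbT.
  move=> [s /andP[]]; rewrite inE => /orP[/eqP ->|sl] Qs Fs; first by left.
  by right; apply/IH; exists s; rewrite ?sl.
split; first by move=> /IH[s /andP[sl Qs] Fs]; exists s; rewrite ?inE ?sl ?orbT.
move=> [s /andP[]]; rewrite inE => /orP[/eqP ->|sl] Qs Fs; first by rewrite Qs in Qx.
by apply/IH; exists s; rewrite ?sl.
Qed.

Lemma atom_disj (T : Type) (R : realType) (X : nat -> T -> R) (a : nat -> nat)
  (s s' : seq bool) : (forall i, (0 < a i)%N) -> size s = size s' -> s != s' ->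
  atom X a s `&` atom X a s' = set0.
Proof.
move=> apos ss' neq; apply/seteqP; split => // t [H1 H2].
have [i [Hi Hne]] : exists i, (i < size s)%N /\ nth false s i != nth false s' i.
  apply: contrapT => Hn; move/eqP: neq; apply; apply: (eq_from_nth (x0 := false)) => //.
  move=> i Hi; apply/eqP; apply: contrapT => Hne; apply: Hn; exists i; split => //.
  exact/negP.
have := H1 i Hi; rewrite H2 -?ss' // /vb.
have ai : (a i)%:R != 0 :> R by rewrite pnatr_eq0 -lt0n apos.
move: Hne; case: (nth false s i); case: (nth false s' i) => //= _.
  by move/esym/eqP; rewrite (negbTE ai).
by move/eqP; rewrite (negbTE ai).
Qed.

Lemma union_prob (d : measure_display) (T : measurableType d) (R : realType)
  (P : probability T R) (X : nat -> {RV P >-> R}) (a : nat -> nat) n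
  (l : seq (seq bool)) (Q : pred (seq bool)) :
  (forall i, (0 < a i)%N) -> uniq l -> (forall s, s \in l -> size s = n) ->
  P (\big[setU/set0]_(s <- l | Q s) atom (fun i => X i : T -> R) a s) =
  (\sum_(s <- l | Q s) P (atom (fun i => X i : T -> R) a s))%E.
Proof.
move=> apos; elim: l => [|x l IH] ul Hs; first by rewrite !big_nil measure0.
move: ul => /= /andP[xl ul].
rewrite !big_cons; case: ifP => Qx; last by apply: IH => // s sl; apply: Hs; rewrite inE sl orbT.
rewrite measureU.
- by congr (_ + _)%E; apply: IH => // s sl; apply: Hs; rewrite inE sl orbT.
- exact: atom_measurable.
- by apply: bigsetU_measurable => s _; exact: atom_measurable.
apply/seteqP; split => // t [Hx /bigU_mem[s /andP[sl _] Hs']].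
have : atom (fun i => X i : T -> R) a x `&` atom (fun i => X i : T -> R) a s = set0.
  apply: atom_disj => //.
    by rewrite Hs ?inE ?eqxx // Hs // inE sl orbT.
  by apply/eqP => E; move: xl; rewrite E sl.
by move/seteqP => [+ _] => /(_ t) /=; apply.
Qed.

Lemma sum_atoms (d : measure_display) (T : measurableType d) (R : realType)
  (P : probability T R) (X : nat -> {RV P >-> R}) (a : nat -> nat) n
  (l : seq (seq bool)) (Q : pred (seq bool)) :
  mutually_independent P (fun i => X i : T -> R) ->
  (forall i, P [set t | X i t = (a i)%:R] = (2^-1)%:E) ->
  (forall i, P [set t | X i t = 0] = (2^-1)%:E) ->
  (forall s, s \in l -> size s = n) ->
  (\sum_(s <- l | Q s) P (atom (fun i => X i : T -> R) a s))%E =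
  ((count Q l)%:R * (2^-1) ^+ n)%:E.
Proof.
move=> Xind Xa X0; elim: l => [|x l IH] Hs; first by rewrite big_nil mul0r.
rewrite big_cons /= IH; last by move=> s sl; apply: Hs; rewrite inE sl orbT.
case: ifP => Qx; last by rewrite add0n.
rewrite atom_prob // Hs ?inE ?eqxx // -EFinD natrD mulrDl mul1r.
by [].
Qed.

Lemma prob_count (d : measure_display) (T : measurableType d) (R : realType)
  (P : probability T R) (X : nat -> {RV P >-> R}) (a : nat -> nat) n
  (A : set T) (Q : pred (seq bool)) :
  (forall i, (0 < a i)%N) ->
  mutually_independent P (fun i => X i : T -> R) ->
  (forall i, P [set t | X i t = (a i)%:R] = (2^-1)%:E) ->
  (forall i, P [set t | X i t = 0] = (2^-1)%:E) ->
  measurable A ->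
  (forall s t, s \in allb n -> atom (fun i => X i : T -> R) a s t -> (A t <-> Q s)) ->
  P A = ((count Q (allb n))%:R * (2^-1) ^+ n)%:E.
Proof.
move=> apos Xind Xa X0 mA HA.
set E := atom (fun i => X i : T -> R) a.
set U := \big[setU/set0]_(s <- allb n | predT s) E s.
have mU : measurable U by apply: bigsetU_measurable => s _; exact: atom_measurable.
have sizes := @size_allb n.
have PU : P U = 1%E.
  rewrite /U (@union_prob _ _ _ _ _ _ n) // ?uniq_allb // (@sum_atoms _ _ _ _ _ _ n) //.
  by rewrite count_predT size_allb_seq natrX exprVn mulfV // expf_neq0 // pnatr_eq0.
have AU : A `&` U = \big[setU/set0]_(s <- allb n | Q s) E s.
  apply/seteqP; split => t.
    move=> [At /bigU_mem[s /andP[sl _] Es]]; apply/bigU_mem; exists s => //.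
    by rewrite sl /=; apply/(HA s t sl Es).
  move=> /bigU_mem[s /andP[sl Qs] Es]; split; first exact/(HA s t sl Es).
  by apply/bigU_mem; exists s => //; rewrite sl.
have PA : P A = P (A `&` U).
  apply/eqP; rewrite eq_le; apply/andP; split; last first.
    apply: le_measure; [rewrite in_setE; exact: measurableI | by rewrite in_setE | exact: subIsetl].
  apply: (@le_trans _ _ (P ((A `&` U) `|` ~` U))).
    apply: le_measure; [by rewrite in_setE | rewrite in_setE; apply: measurableU; [exact: measurableI|exact: measurableC] |].
    by move=> t At; case: (pselect (U t)) => Ut; [left|right].
  rewrite measureU ?probability_setC //; first last.
  - by apply/seteqP; split => // t [[_ Ut] nUt].
  - exact: measurableC.
  - exact: measurableI.
  have PC : P (~` U) = 0%E by rewrite probability_setC // PU -EFinB subrr.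
  by rewrite [X in (_ + X <= _)%E](_ : _ = 0%E) ?adde0 //; exact: PC.
by rewrite PA AU (@union_prob _ _ _ _ _ _ n) // ?uniq_allb // (@sum_atoms _ _ _ _ _ _ n).
Qed.

Lemma bound_exists (a : nat -> nat) : (forall i, (0 < a i)%N) ->
  (forall n, finite_set [set i | a i = n]) ->
  forall m, exists N, forall i, (N <= i)%N -> (m < a i)%N.
Proof.
move=> apos afin; elim=> [|m [N1 H1]]; first by exists 0%N.
set S := fset_set [set i | a i = m.+1].
exists (maxn N1 (\max_(i <- S) i).+1) => i; rewrite geq_max => /andP[h1 h2].
have := H1 i h1; rewrite leq_eqVlt => /orP[/eqP E|//].
have iS : i \in S by rewrite in_fset_set // in_setE /= E.
have := @leq_bigmax_seq _ (S : seq nat) predT (fun j => j) i iS isT.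
by rewrite leqNgt h2.
Qed.

Theorem theoremA3 (d : measure_display) (T : measurableType d) (R : realType)
  (P : probability T R) (a : nat -> nat) (X : nat -> {RV P >-> R})
  (apos : forall i, (0 < a i)%N)
  (a0 : a 0%N = 1%N)
  (afin : forall n, finite_set [set i | a i = n])
  (Xind : mutually_independent P (fun i => X i : T -> R))
  (Xa : forall i, P [set t | X i t = (a i)%:R] = (2^-1)%:E)
  (X0 : forall i, P [set t | X i t = 0] = (2^-1)%:E) :
  let c := fun (L n : nat) =>
    condprob P [set t | X 0%N t = 1]
               [set t | \sum_(i < n) X i t <= L%:R] in
  let beta := fun k : nat =>
    ((alpha a k.+1)%:R `^ (k.+1%:R)^-1 : R)%:E in
  (forall L : nat, cvgn (c L.+1)) /\
  (limn_esup beta = +oo%E ->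
     limn_einf (fun L : nat => (limn (c L.+1))%:E) = 0%E) /\
  ((limn_esup beta < +oo)%E ->
     (0 < limn_esup (fun L : nat => (limn (c L.+1))%:E))%E).
Proof.
move=> c beta.
have mS : forall n (L : R), measurable [set t | \sum_(i < n) X i t <= L].
  move=> n L.
  have mf : measurable_fun setT (fun t => \sum_(i < n) X i t).
    by apply: measurable_sum => i; exact: measurable_funP.
  suff -> : [set t | \sum_(i < n) X i t <= L] =
            setT `&` ((fun t => \sum_(i < n) X i t) @^-1` `]-oo, L]).
    by apply: mf => //; exact: measurable_itv.
  apply/seteqP; split => t /=.
    by move=> H; split => //; rewrite /= in_itv /=.
  by move=> [_]; rewrite /= in_itv /=.
have m1 : measurable [set t | X 0%N t = 1].
  exact: (measurable_funPTI (X 0%N) (measurable_set1 (1 : R))).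
have PS : forall n L, P [set t | \sum_(i < n) X i t <= L%:R] =
                      ((cnt a n L)%:R * (2^-1) ^+ n)%:E.
  move=> n L; rewrite -count_sumv.
  apply: (@prob_count _ _ _ _ _ _ n _ (fun s => (sumv a s <= L)%N)) => //; first exact: Xind.
  move=> s t sl Es; have sz := @size_allb _ _ sl.
  suff E : \sum_(i < n) X i t = (sumv a s)%:R by rewrite /= E ler_nat.
  rewrite sumv_nth natr_sum sz; apply: eq_bigr => i _.
  by rewrite (Es i) ?sz // /vb; case: nth; rewrite ?mul1n ?mul0n.
set a' := fun i => a i.+1.
have PS1 : forall n L,
  P ([set t | X 0%N t = 1] `&` [set t | \sum_(i < n.+1) X i t <= L.+1%:R]) =
  ((cnt a' n L)%:R * (2^-1) ^+ n.+1)%:E.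
  move=> n L.
  have <- : count (fun s => head false s && (sumv a s <= L.+1)%N) (allb n.+1) = cnt a' n L.
    by rewrite count_head a0 ltn0Sn subn1.
  apply: (@prob_count _ _ _ _ _ _ n.+1) => //; first exact: Xind.
    exact: measurableI.
  move=> s t sl Es; have sz := @size_allb _ _ sl.
  have X0t : X 0%N t = if head false s then 1 else 0.
    by rewrite (Es 0%N) ?sz // /vb nth0 a0.
  have E : \sum_(i < n.+1) X i t = (sumv a s)%:R.
    rewrite sumv_nth natr_sum sz; apply: eq_bigr => i _.
    by rewrite (Es i) ?sz // /vb; case: nth; rewrite ?mul1n ?mul0n.
  rewrite /= X0t E ler_nat; case: (head false s) => /=.
    by split; [case | split].
  split => [[/eqP]|//]; by rewrite eq_sym oner_eq0.
have cE : forall L n, c L.+1 n.+1 =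
    (cnt a' n L)%:R / ((cnt a' n L.+1)%:R + (cnt a' n L)%:R).
  move=> L n; rewrite /c /condprob PS1 PS /=.
  by rewrite a0 ltn0Sn subn1 -/a' natrD invfM mulrACA mulfV ?mulr1 // expf_neq0 // invr_eq0 pnatr_eq0.
have bnd' : forall m, exists N, forall i, (N <= i)%N -> (m < a' i)%N.
  move=> m; have [N HN] := @bound_exists a apos afin m.
  by exists N => i Ni; apply: HN; exact: leqW.
have [Nb HNb] := choice bnd'.
set F := fun m => cnt a' (Nb m) m.
have Feq : forall m n, (forall i, (n <= i)%N -> (m < a' i)%N) -> cnt a' n m = F m.
  move=> m n Hn.
  rewrite -(@cnt_stab a' n m (maxn n (Nb m)) Hn (leq_maxl n (Nb m))).
  exact: (@cnt_stab a' (Nb m) m (maxn n (Nb m)) (HNb m) (leq_maxr n (Nb m))).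
have climit : forall L, c L.+1 @ \oo --> rr R F L.
  move=> L; apply: cvg_near_cst; exists (Nb L.+1).+1 => // -[//|n] /= Hn.
  rewrite cE (Feq L n) ?(Feq L.+1 n) //.
    by move=> i ni; apply: HNb; apply: leq_trans ni.
  by move=> i ni; apply: ltnW; apply: HNb; apply: leq_trans ni.
have limE : forall L, limn (c L.+1) = rr R F L by move=> L; exact: cvg_lim (climit L).
have F0 : forall m, (0 < F m)%N by move=> m; exact: (cnt_gt0 a' (Nb m) m).
have Fal : forall m, (2 <= m)%N -> (alpha a m <= F m)%N.
  move=> m m2.
  apply: (leq_trans (@alpha_le_count a m (Nb m).+1 (afin m) _)).
    case=> [//|i] Hi; rewrite neq_ltn; apply/orP; right; exact: (HNb m i Hi).
  rewrite /= -[1%N]addn0 iotaDl count_map a0.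
  have -> : (1 == m) = false by case: m m2 => [|[|]].
  exact: (cnt_count a' (Nb m) m).
split; first by move=> L; apply/cvg_ex; exists (rr R F L); exact: climit.
have -> : (fun L : nat => (limn (c L.+1))%:E) = (fun L => (rr R F L)%:E).
  by apply/funext => L; rewrite limE.
split.
  move=> Hb; apply: einf_zero.
    by move=> k; rewrite lee_fin /rr divr_ge0 // addr_ge0.
  move=> e e0 n; apply: contrapT => Hn.
  have He : forall k, (n <= k)%N -> e <= rr R F k.
    move=> k nk; rewrite leNgt; apply/negP => Hk; apply: Hn; exists k => //.
  have [M [n1 HM]] := @part1_core R F (alpha a) e n F0 Fal e0 He.
  have : (limn_esup beta <= M%:E)%E.
    by apply: esup_le_ev; exists n1 => k nk; rewrite /beta lee_fin; exact: HM.
  by rewrite Hb leye_eq.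
move=> Hb.
have [x Hx] : exists x : R, (limn_esup beta < x%:E)%E.
  case E: (limn_esup beta) Hb => [r| |] // _.
    by exists (r + 1); rewrite lte_fin ltrDl.
  by exists 0; rewrite ltNye.
have [n0 Hn0] := @esup_lt_ev R beta x%:E Hx.
have x0 : 0 <= x.
  have := Hn0 n0 (leqnn _); rewrite /beta lte_fin => H.
  by apply: le_trans (ltW H); exact: powR_ge0.
have Hal1 : forall k, (n0 <= k)%N -> (alpha a k.+1)%:R <= x ^+ k.+1.
  move=> k nk; have := Hn0 k nk; rewrite /beta lte_fin => H.
  have al0 : 0 <= (alpha a k.+1)%:R :> R by [].
  have -> : (alpha a k.+1)%:R = ((alpha a k.+1)%:R `^ (k.+1%:R)^-1) `^ (k.+1)%:R :> R.
    by rewrite -powRrM mulVf ?powRr1 // pnatr_eq0.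
  rewrite -powR_mulrn //; apply: ge0_ler_powR => //; last exact: ltW.
  by rewrite nnegrE powR_ge0.
set B := Num.max x 1.
set C := ((\max_(j < n0.+1) alpha a j)%:R + 1 : R).
have B1 : 1 <= B by rewrite le_max lexx orbT.
have C1 : 1 <= C by rewrite lerDr.
have C0 : 0 <= C by apply: le_trans C1.
have HalC : forall k, (alpha a k)%:R <= C * B ^+ k.
  move=> k; case: (leqP k n0) => kn.
    apply: (@le_trans _ _ C).
      rewrite /C ler_wpDr // ler_nat.
      exact: (@leq_bigmax _ (fun j : 'I_n0.+1 => alpha a j) (Ordinal (kn : (k < n0.+1)%N))).
    by rewrite ler_peMr // exprn_ege1.
  case: k kn => [//|k] kn.
  apply: le_trans (Hal1 k kn) _.
  apply: (@le_trans _ _ (B ^+ k.+1)).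
    apply: lerXn2r; [by rewrite nnegrE | by rewrite nnegrE (le_trans ler01 B1) | by rewrite le_max lexx].
  by rewrite ler_peMl // exprn_ge0 // (le_trans ler01 B1).
have Fub : forall m, (F m)%:R <= expR (2 * C) * (2 * B) ^+ m.
  by move=> m; exact: part2_bound.
have y1 : 1 <= 2 * B.
  by rewrite (le_trans B1) // mulr_natl mulr2n lerDr (le_trans ler01 B1).
apply: (@esup_pos _ _ ((1 + 2 * (2 * B))^-1)).
  by rewrite invr_gt0 addr_gt0 // mulr_gt0 // (lt_le_trans ltr01 y1).
move=> n; have [k nk Hk] := @part2_core R F _ _ F0 y1 Fub n.
by exists k => //; rewrite lee_fin.
Qed.
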